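(* Let $f=a_dx^d+\dots+a_0\in\mathbb Z[x]$ be the associated polynomial of a cyclic expansive automorphism of a compact connected abelian group, assumed irreducible, and let $\beta$ be a root of $f$. Then $f$ is monic up to a sign (i.e. $a_d=\pm1$) if and only if all unstable prime divisors of $\mathbb Q(\beta)$ are archimedean.
   Context: The associated polynomial is primitive with $a_0\ne0$, $a_d>0$, and hyperbolic. A prime divisor (place) $P$ of $\mathbb Q(\beta)$ is unstable if $\beta^n\to0$ as $n\to-\infty$ in the $P$-topology. *)

(* Defs.v *)
From HB Require Import structures.
From mathcomp Require Import all_boot all_order all_algebra all_field.
Set Implicit Arguments. Unset Strict Implicit. Unset Printing Implicit Defensive.
Import Order.TTheory GRing.Theory Num.Theory.
Local Open Scope ring_scope.

(* A place
   (prime divisor) of K is an equivalence class of nontrivial absolute values;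
   every class contains such a representative satisfying the triangle
   inequality, and the notions "unstable" and "archimedean" below are class
   invariants, so quantifying over absolute values = quantifying over places. *)
Definition is_absval (K : fieldType) (R : realFieldType) (v : K -> R) : Prop :=
  [/\ forall x, 0 <= v x,
      forall x, v x = 0 <-> x = 0,
      forall x y, v (x * y) = v x * v y,
      forall x y, v (x + y) <= v x + v y
    & exists x, x != 0 /\ v x != 1 ].

Definition nonarchimedean (K : fieldType) (R : realFieldType) (v : K -> R) : Prop :=
  forall x y, v (x + y) <= Num.max (v x) (v y).

Definition archimedean_place (K : fieldType) (R : realFieldType) (v : K -> R) : Prop :=
  ~ nonarchimedean v.

(* P is unstable for b: b^n -> 0 as n -> -oo in the topology of v,
   i.e. v (b^-m) -> 0 as m -> +oo (m natural). *)
Definition unstable (K : fieldType) (R : realFieldType) (v : K -> R) (b : K) : Prop :=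
  forall e : R, 0 < e -> exists N : nat, forall m : nat, (N <= m)%N -> v (b ^- m) < e.

Definition hyperbolic (f : {poly int}) : Prop :=
  forall z : algC, root (map_poly (fun a : int => a%:~R) f) z -> `|z| != 1.

(* Standing assumptions on the associated polynomial of a cyclic expansive
   automorphism of a compact connected abelian group. *)
Definition associated_poly (f : {poly int}) : Prop :=
  [/\ zcontents f = 1,
      f`_0 != 0,
      0 < lead_coef f
    & hyperbolic f].

(* Main.v *)
Require Import Defs.
From HB Require Import structures.
From mathcomp Require Import all_boot all_order all_algebra all_field.
From mathcomp Require boolp classical_sets.
From Stdlib Require Import Classical ClassicalEpsilon.
From mathcomp Require Import zify ring lra.
Import Order.TTheory GRing.Theory Num.Theory.
Local Open Scope ring_scope.
Set Implicit Arguments. Unset Strict Implicit. Unset Printing Implicit Defensive.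

Section ValRing.
Variables (K : fieldType) (p g : K).

Record good (B M : K -> Prop) : Prop := Good {
  gB1 : B 1;
  gBD : forall x y, B x -> B y -> B (x + y);
  gBN : forall x, B x -> B (- x);
  gBM : forall x y, B x -> B y -> B (x * y);
  gMB : forall x, M x -> B x;
  gM0 : M 0;
  gMD : forall x y, M x -> M y -> M (x + y);
  gMM : forall x y, B x -> M y -> M (x * y);
  gM1 : ~ M 1;
  gMp : M p;
  gMg : M g }.

Definition coefIn (S : K -> Prop) (q : {poly K}) := forall i, S q`_i.

Lemma sumIn (S : K -> Prop) (I : Type) (r : seq I) (P : pred I) (F : I -> K) :
  S 0 -> (forall x y, S x -> S y -> S (x + y)) -> (forall i, P i -> S (F i)) ->
  S (\sum_(i <- r | P i) F i).
Proof. by move=> S0 SD SF; apply: big_ind => //. Qed.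

Section Adj.
Variables (B M : K -> Prop) (gd : good B M) (y : K).
Definition Badj z := exists q, coefIn B q /\ z = q.[y].
Definition Madj z := exists q, coefIn M q /\ z = q.[y].

Lemma B0 : B 0. Proof. exact: (gMB gd) (gM0 gd). Qed.

Lemma coefIn_mul (S T : K -> Prop) q1 q2 :
  T 0 -> (forall x y, T x -> T y -> T (x + y)) ->
  (forall a b, S a -> T b -> T (a * b)) ->
  coefIn S q1 -> coefIn T q2 -> coefIn T (q1 * q2).
Proof.
move=> T0 TD ST c1 c2 i; rewrite coefM; apply: sumIn => // j _; exact: ST.
Qed.

Lemma coefInC (S : K -> Prop) c : S 0 -> S c -> coefIn S c%:P.
Proof. by move=> S0 Sc i; rewrite coefC; case: eqP. Qed.

Lemma adj_good : (forall q, coefIn M q -> q.[y] <> 1) -> good Badj Madj.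
Proof.
move=> H; have B0' := B0.
split.
- by exists 1; split; [exact: (coefInC B0' (gB1 gd)) | rewrite hornerC].
- move=> _ _ [q1 [c1 ->]] [q2 [c2 ->]]; exists (q1 + q2); split; last by rewrite hornerD.
  by move=> i; rewrite coefD; apply: (gBD gd).
- move=> _ [q1 [c1 ->]]; exists (- q1); split; last by rewrite hornerN.
  by move=> i; rewrite coefN; apply: (gBN gd).
- move=> _ _ [q1 [c1 ->]] [q2 [c2 ->]]; exists (q1 * q2); split; last by rewrite hornerM.
  exact: (coefIn_mul B0' (gBD gd) (gBM gd) c1 c2).
- move=> _ [q1 [c1 ->]]; exists q1; split=> // i; exact: (gMB gd).
- by exists 0; split; [move=> i; rewrite coef0; exact: (gM0 gd) | rewrite horner0].
- move=> _ _ [q1 [c1 ->]] [q2 [c2 ->]]; exists (q1 + q2); split; last by rewrite hornerD.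
  by move=> i; rewrite coefD; apply: (gMD gd).
- move=> _ _ [q1 [c1 ->]] [q2 [c2 ->]]; exists (q1 * q2); split; last by rewrite hornerM.
  exact: (coefIn_mul (gM0 gd) (gMD gd) (gMM gd) c1 c2).
- by move=> [q [c e]]; apply: (H q c); rewrite -e.
- exists p%:P; split; last by rewrite hornerC.
  exact: (coefInC (gM0 gd) (gMp gd)).
- exists g%:P; split; last by rewrite hornerC.
  exact: (coefInC (gM0 gd) (gMg gd)).
Qed.

Lemma adj_incl : (forall x, B x -> Badj x) /\ (forall x, M x -> Madj x) /\ Badj y.
Proof.
have B0' := B0.
split; [|split].
- by move=> x Bx; exists x%:P; split; [exact: coefInC | rewrite hornerC].
- by move=> x Mx; exists x%:P; split; [exact: (coefInC (gM0 gd) Mx) | rewrite hornerC].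
- exists 'X; split; last by rewrite hornerX.
  by move=> i; rewrite coefX; case: eqP => _; [exact: (gB1 gd)|].
Qed.
End Adj.

End ValRing.

Section Zorn.
Variables (K : fieldType) (p g : K).
Definition incl (X Y : K -> Prop) := forall x, X x -> Y x.
Definition GT := {bm : (K -> Prop) * (K -> Prop) | good p g bm.1 bm.2}.
Definition GR (s t : GT) := boolp.asbool (incl (sval s).1 (sval t).1 /\ incl (sval s).2 (sval t).2).

Lemma GRP s t : GR s t <-> (incl (sval s).1 (sval t).1 /\ incl (sval s).2 (sval t).2).
Proof. by split => [/boolp.asboolP|?]; [|apply/boolp.asboolP]. Qed.

Lemma GRrefl s : GR s s.
Proof. by apply/(proj2 (GRP s s)); split. Qed.

Lemma exists_max B0 M0 : good p g B0 M0 ->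
  exists B M, good p g B M /\
   (forall B' M', good p g B' M' -> incl B B' -> incl M M' -> incl B' B /\ incl M' M).
Proof.
move=> g0; pose t0 : GT := exist _ (B0, M0) g0.
have [|||t tmax] := @classical_sets.ZL_preorder GT t0 GR.
- move=> t; apply/(proj2 (GRP t t)); by split.
- move=> r s t /GRP[h1 h2] /GRP[h3 h4]; apply/GRP; split=> x Hx; auto.
- move=> A Atot.
  have [[s0 As0]|none] := classic (exists s, A s); last first.
    exists t0 => s As; exfalso; apply: none; by exists s.
  have two : forall s1 s2, A s1 -> A s2 -> exists s, A s /\ GR s1 s /\ GR s2 s.
    move=> s1 s2 A1 A2; have [h|h] := Atot s1 s2 A1 A2.
      by exists s2; split=> //; split=> //; apply: GRrefl.
    by exists s1; split=> //; split=> //; apply: GRrefl.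
  pose Bu x := exists s, A s /\ (sval s).1 x.
  pose Mu x := exists s, A s /\ (sval s).2 x.
  have gu : good p g Bu Mu.
    case: s0 As0 => [[Bs Ms] gs] As0.
    split.
    + by exists (exist _ (Bs, Ms) gs); split => //; exact: (gB1 gs).
    + move=> x y [s1 [A1 h1]] [s2 [A2 h2]]; have [s [As [/GRP[i1 _] /GRP[i2 _]]]] := two _ _ A1 A2.
      by exists s; split=> //; apply: (gBD (proj2_sig s)); auto.
    + by move=> x [s1 [A1 h1]]; exists s1; split=> //; apply: (gBN (proj2_sig s1)).
    + move=> x y [s1 [A1 h1]] [s2 [A2 h2]]; have [s [As [/GRP[i1 _] /GRP[i2 _]]]] := two _ _ A1 A2.
      by exists s; split=> //; apply: (gBM (proj2_sig s)); auto.
    + by move=> x [s1 [A1 h1]]; exists s1; split=> //; apply: (gMB (proj2_sig s1)).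
    + by exists (exist _ (Bs, Ms) gs); split => //; exact: (gM0 gs).
    + move=> x y [s1 [A1 h1]] [s2 [A2 h2]]; have [s [As [/GRP[_ i1] /GRP[_ i2]]]] := two _ _ A1 A2.
      by exists s; split=> //; apply: (gMD (proj2_sig s)); auto.
    + move=> x y [s1 [A1 h1]] [s2 [A2 h2]]; have [s [As [/GRP[i1 _] /GRP[_ i2]]]] := two _ _ A1 A2.
      by exists s; split=> //; apply: (gMM (proj2_sig s)); auto.
    + by move=> [s1 [A1 h1]]; apply: (gM1 (proj2_sig s1)).
    + by exists (exist _ (Bs, Ms) gs); split => //; exact: (gMp gs).
    + by exists (exist _ (Bs, Ms) gs); split => //; exact: (gMg gs).
  exists (exist _ (Bu, Mu) gu) => s As; apply/GRP; split=> x h /=.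
    by exists s. by exists s.
- case: t tmax => [[B M] gBM] tmax; exists B, M; split=> // B' M' g' i1 i2.
  have := tmax (exist _ (B', M') g'); rewrite /classical_sets.premaximal.
  move=> h; have := h (proj2 (GRP (exist _ (B, M) gBM) (exist _ (B', M') g')) (conj i1 i2)).
  by move=> /GRP.
Qed.
End Zorn.

Lemma horner_rev (K : fieldType) (z : K) (q : {poly K}) n :
  z != 0 -> (size q <= n.+1)%N ->
  z ^+ n * q.[z^-1] = \sum_(i < size q) q`_i * z ^+ (n - i).
Proof.
move=> z0 sq; rewrite horner_coef mulr_sumr; apply: eq_bigr => i _.
have lin : (i <= n)%N by have := ltn_ord i; move: sq; clear; lia.
by rewrite mulrCA -{1}(subnK lin) exprD exprVn mulfK // expf_neq0.
Qed.

Section Max.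
Variables (K : fieldType) (p g : K) (B M : K -> Prop) (gd : good p g B M).
Hypothesis hmax : forall B' M', good p g B' M' -> incl B B' -> incl M M' -> incl B' B /\ incl M' M.

Lemma BMN x : M x -> M (- x).
Proof. move=> Mx; rewrite -mulN1r; apply: (gMM gd) => //; apply: (gBN gd); exact: (gB1 gd). Qed.

Lemma Bnat n : B n%:R.
Proof.
elim: n => [|n IH]; first exact: (B0 gd).
by rewrite -addn1 natrD; apply: (gBD gd) => //; exact: (gB1 gd).
Qed.

Lemma max_adj y : B y \/ exists q, coefIn M q /\ q.[y] = 1.
Proof.
have [h|h] := classic (exists q, coefIn M q /\ q.[y] = 1); [by right|left].
have H : forall q, coefIn M q -> q.[y] <> 1 by move=> q c e; apply: h; exists q.
have [i1 [i2 iy]] := adj_incl gd y.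
have [j1 _] := hmax (adj_good gd H) i1 i2.
exact: j1.
Qed.

Lemma max_ideal b : B b -> ~ M b -> exists m c, M m /\ B c /\ m + b * c = 1.
Proof.
move=> Bb nMb; have [h|h] := classic (exists m c, M m /\ B c /\ m + b * c = 1) => //.
pose M' x := exists m c, M m /\ B c /\ x = m + b * c.
have g' : good p g B M'.
  split; try exact: (gB1 gd); try exact: (gBD gd); try exact: (gBN gd); try exact: (gBM gd).
  - move=> _ [m [c [Mm [Bc ->]]]]; apply: (gBD gd); first exact: (gMB gd).
    exact: (gBM gd).
  - by exists 0, 0; split; [exact: (gM0 gd)|split; [exact: (B0 gd)|rewrite mulr0 addr0]].
  - move=> _ _ [m [c [Mm [Bc ->]]]] [m' [c' [Mm' [Bc' ->]]]].
    exists (m + m'), (c + c'); split; first exact: (gMD gd).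
    by split; [exact: (gBD gd) | rewrite mulrDr; ring].
  - move=> x _ Bx [m [c [Mm [Bc ->]]]]; exists (x * m), (x * c).
    split; first exact: (gMM gd). by split; [exact: (gBM gd) | rewrite mulrDr mulrCA].
  - by move=> [m [c [Mm [Bc e]]]]; apply: h; exists m, c.
  - by exists p, 0; split; [exact: (gMp gd)|split; [exact: (B0 gd)|rewrite mulr0 addr0]].
  - by exists g, 0; split; [exact: (gMg gd)|split; [exact: (B0 gd)|rewrite mulr0 addr0]].
have i2 : incl M M'.
  by move=> x h'; exists x, 0; split=> //; split; [exact: (B0 gd)|rewrite mulr0 addr0].
have [_ j2] := hmax g' (fun x h => h) i2.
case: nMb; apply: j2; exists 0, 1; split; first exact: (gM0 gd).
by split; [exact: (gB1 gd)| rewrite add0r mulr1].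
Qed.

Lemma Bexp x n : B x -> B (x ^+ n).
Proof.
move=> Bx; elim: n => [|n IH]; first exact: (gB1 gd).
by rewrite exprS; apply: (gBM gd).
Qed.

Lemma MBM x y : M x -> B y -> M (x * y).
Proof. by move=> Mx By; rewrite mulrC; apply: (gMM gd). Qed.

Lemma M_neq1 x : M x -> x != 1.
Proof. by move=> Mx; apply/eqP => e; apply: (gM1 gd); rewrite -e. Qed.

Lemma local b : B b -> ~ M b -> B b^-1.
Proof.
move=> Bb nMb; have [m [c [Mm [Bc e]]]] := max_ideal Bb nMb.
set z := 1 - m.
have z0 : z != 0 by rewrite /z subr_eq0 eq_sym; apply: M_neq1.
have Bz : B z by rewrite /z; apply: (gBD gd); [exact: (gB1 gd)|apply: (gBN gd); exact: (gMB gd)].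
have Bzi : B z^-1.
  have [//|[q [cq e1]]] := max_adj z^-1.
  have := horner_rev z0 (leqnSn (size q)); rewrite e1 mulr1 => e2.
  have Mz : M (z ^+ size q).
    rewrite e2; apply: sumIn; [exact: (gM0 gd)|exact: (gMD gd)|move=> i _].
    by apply: MBM => //; apply: Bexp.
  have Mz1 : M (z ^+ size q - 1).
    elim: (size q) => [|n IH]; first by rewrite expr0 subrr; exact: (gM0 gd).
    have -> : z ^+ n.+1 - 1 = z * (z ^+ n - 1) + - m by rewrite exprS /z; ring.
    by apply: (gMD gd); [apply: (gMM gd) | apply: BMN].
  exfalso; apply: (gM1 gd).
  have -> : 1 = z ^+ size q + - (z ^+ size q - 1) by ring.
  by apply: (gMD gd) => //; apply: BMN.
have bc : b * c = z by rewrite /z -e; ring.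
have b0 : b != 0 by apply: contraNneq z0 => b0; rewrite -bc b0 mul0r.
have c0 : c != 0 by apply: contraNneq z0 => c0; rewrite -bc c0 mulr0.
have -> : b^-1 = c * z^-1 by rewrite -bc; field; rewrite b0 c0.
exact: (gBM gd).
Qed.

Lemma reduce y q1 q2 : y != 0 -> coefIn M q1 -> coefIn M q2 -> q1.[y] = 1 -> q2.[y^-1] = 1 ->
  (size q2 <= size q1)%N -> exists q, coefIn M q /\ q.[y] = 1 /\ (size q < size q1)%N.
Proof.
move=> y0 c1 c2 e1 e2 s21.
set n := (size q1).-1.
have q10 : q1 != 0 by apply: contra_eq_neq e1 => ->; rewrite horner0 eq_sym oner_eq0.
have sq1 : size q1 = n.+1 by rewrite /n prednK // size_poly_gt0.
have n1 : (0 < n)%N.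
  rewrite lt0n; apply/eqP => n0; apply: (gM1 gd).
  by move: e1; rewrite horner_coef sq1 n0 big_ord1 expr0 mulr1 => <-.
pose r := \sum_(j < size q2) (q2`_j *: 'X^(n - j)).
have rE : r.[y] = y ^+ n.
  rewrite horner_sum -[RHS]mulr1 -e2 (horner_rev y0 (leq_trans s21 (eq_leq sq1))).
  by apply: eq_bigr => j _; rewrite hornerZ hornerXn.
have rc i : r`_i = \sum_(j < size q2) q2`_j * (i == (n - j)%N)%:R.
  by rewrite coef_sum; apply: eq_bigr => j _; rewrite coefZ coefXn.
have rM : coefIn M r.
  move=> i; rewrite rc; apply: sumIn; [exact: (gM0 gd)|exact: (gMD gd)|move=> j _].
  by apply: MBM; [exact: c2 | exact: Bnat].
have rhi i : (n < i)%N -> r`_i = 0.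
  move=> ni; rewrite rc big1 // => j _.
  have -> : (i == (n - j)%N) = false by apply/negbTE; move: ni; clear; lia.
  by rewrite mulr0.
set a := q1`_n; set u := 1 - r`_n.
have Bu : B u by apply: (gBD gd); [exact: (gB1 gd)|apply: (gBN gd); apply: (gMB gd); exact: rM].
have nMu : ~ M u.
  move=> Mu; apply: (gM1 gd); have -> : 1 = u + r`_n by rewrite /u; ring.
  by apply: (gMD gd) => //; exact: rM.
have Bui := local Bu nMu.
have u0 : u != 0 by apply: contra_not_neq nMu => ->; exact: (gM0 gd).
exists (q1 - a *: 'X^n + (a / u) *: (r - r`_n *: 'X^n)).
split; [|split].
- move=> i; rewrite !(coefD, coefN, coefZ, coefXn).
  apply: (gMD gd); first apply: (gMD gd).
  + exact: c1.
  + by apply: BMN; apply: MBM; [exact: c1 | exact: Bnat].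
  + apply: MBM; first by apply: MBM; [exact: c1|].
    apply: (gBD gd); first by apply: (gMB gd); exact: rM.
    apply: (gBN gd); apply: (gBM gd); [apply: (gMB gd); exact: rM | exact: Bnat].
- rewrite !(hornerD, hornerN, hornerZ, hornerXn) e1 rE /u; field.
  by move: u0; rewrite /u.
- rewrite sq1 ltnS; apply/leq_sizeP => j jn.
  rewrite !(coefD, coefN, coefZ, coefXn).
  have [->|jn'] := eqVneq j n.
    by rewrite /a !mulr1 !subrr mulr0 addr0.
  have nj : (n < j)%N by rewrite ltn_neqAle eq_sym jn' jn.
  by rewrite !mulr0 !subr0 rhi // nth_default ?sq1 // mulr0 addr0.
Qed.

Lemma noboth N : forall (y : K) (q1 q2 : {poly K}), y != 0 -> (size q1 + size q2 <= N)%N ->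
  coefIn M q1 -> coefIn M q2 -> q1.[y] = 1 -> q2.[y^-1] = 1 -> False.
Proof.
elim: N => [|N IH] y q1 q2 y0 sN c1 c2 e1 e2.
  have : size q1 = 0%N by move: sN; clear; lia.
  move/eqP; rewrite size_poly_eq0 => /eqP q10; move: e1; rewrite q10 horner0.
  by move/eqP; rewrite eq_sym oner_eq0.
have [s21|s12] := leqP (size q2) (size q1).
  have [q [c [e s]]] := reduce y0 c1 c2 e1 e2 s21.
  by apply: (IH y q q2) => //; move: sN s; clear; lia.
have y0' : y^-1 != 0 by rewrite invr_eq0.
have e1' : q1.[y^-1^-1] = 1 by rewrite invrK.
have [q [c [e s]]] := reduce y0' c2 c1 e2 e1' (ltnW s12).
apply: (IH y q1 q) => //; first by move: sN s; clear; lia.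
Qed.

Lemma valuation x : x != 0 -> B x \/ B x^-1.
Proof.
move=> x0; have [h|[q1 [c1 e1]]] := max_adj x; [by left|].
have [h|[q2 [c2 e2]]] := max_adj x^-1; [by right|].
exfalso; exact: (@noboth _ x q1 q2 x0 (leqnn _) c1 c2 e1 e2).
Qed.
End Max.

Section Abs.
Variables (K : fieldExtType rat) (P : nat) (Pp : prime P) (g : K) (B M : K -> Prop).
Hypotheses (gd : good (P%:R) g B M) (loc : forall b, B b -> ~ M b -> B b^-1)
  (val : forall x, x != 0 -> B x \/ B x^-1).
Local Notation p := (P%:R : K).

Lemma natK_neq0 n : (0 < n)%N -> (n%:R : K) != 0.
Proof.
move=> n0; rewrite -(rmorph_nat (in_alg K)) fmorph_eq0 pnatr_eq0 -lt0n //.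
Qed.

Lemma intK_neq0 (z : int) : z != 0 -> (z%:~R : K) != 0.
Proof. by move=> z0; rewrite -(rmorph_int (in_alg K)) fmorph_eq0 intr_eq0. Qed.

Lemma p0 : p != 0. Proof. by apply: natK_neq0; exact: prime_gt0. Qed.

Definition U x := x != 0 /\ B x /\ B x^-1.

Lemma U1 : U 1. Proof. by split; [exact: oner_neq0|rewrite invr1; split; exact: (gB1 gd)]. Qed.

Lemma UM x y : U x -> U y -> U (x * y).
Proof.
move=> [x0 [Bx Bxi]] [y0 [By Byi]]; split; first by rewrite mulf_neq0.
by rewrite invfM; split; apply: (gBM gd).
Qed.

Lemma UV x : U x -> U x^-1.
Proof. by move=> [x0 [Bx Bxi]]; split; [rewrite invr_eq0|rewrite invrK]. Qed.

Lemma UX x n : U x -> U (x ^+ n).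
Proof. by move=> Ux; elim: n => [|n IH]; [exact: U1|rewrite exprS; apply: UM]. Qed.

Lemma Uz x (z : int) : U x -> U (x ^ z).
Proof. by move=> Ux; case: z => n /=; [apply: UX|apply: UV; apply: UX]. Qed.

Lemma UN x : U x -> U (- x).
Proof. by move=> Ux; rewrite -mulN1r; apply: UM => //; split; [rewrite oppr_eq0 oner_eq0|rewrite invrN invr1; split; apply: (gBN gd); exact: (gB1 gd)]. Qed.

Lemma notMU x : U x -> ~ M x.
Proof.
move=> [x0 [Bx Bxi]] Mx; apply: (gM1 gd); rewrite -(divff x0).
by apply: (MBM gd).
Qed.

Lemma Bint (z : int) : B z%:~R.
Proof.
case: z => n; first exact: (Bnat gd).
by rewrite NegzE mulrNz; apply: (gBN gd); exact: (Bnat gd).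
Qed.

Lemma Mp : M p. Proof. exact: (gMp gd). Qed.

Lemma Unat n : (0 < n)%N -> exists e : int, U (n%:R / p ^ e).
Proof.
move=> n0; have [m cop Dn] := pfactor_coprime Pp n0.
exists (logn P n); have m0 : (0 < m)%N.
  by move: n0; rewrite Dn muln_gt0 => /andP[].
have -> : n%:R / p ^ (logn P n) = (m%:R : K).
  by rewrite {1}Dn natrM natrX -exprnP mulfK // expf_neq0 // p0.
have nM : ~ M m%:R.
  move=> Mm; have [u [v e]] := Bezoutz P m.
  have : gcdz P m = 1 by rewrite /gcdz /=; apply/eqP.
  move=> g1; rewrite g1 in e.
  have : ((u * P + v * m)%:~R : K) = 1 by rewrite e.
  rewrite intrD !intrM /= => e1; apply: (gM1 gd); rewrite -e1.
  apply: (gMD gd); apply: (gMM gd); try exact: Bint; first exact: Mp.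
  exact: Mm.
split; first exact: natK_neq0.
split; first exact: (Bnat gd).
exact: (loc (Bnat gd m) nM).
Qed.

Lemma Uint (z : int) : z != 0 -> exists e : int, U (z%:~R / p ^ e).
Proof.
case: z => n z0.
  by apply: Unat; rewrite lt0n; move: z0; apply: contra => /eqP ->.
have [e Ue] := Unat (ltn0Sn n); exists e.
by rewrite NegzE mulrNz mulNr; apply: UN.
Qed.

Lemma Urat (c : rat) : c != 0 -> exists e : int, U (c%:A / p ^ e).
Proof.
move=> c0.
have -> : c%:A = ((numq c)%:~R / (denq c)%:~R : K).
  by rewrite -{1}(divq_num_den c) [LHS](fmorph_div (in_alg K)) !rmorph_int.
have nq : numq c != 0 by rewrite numq_eq0.
have dq : denq c != 0 by rewrite gt_eqF // denq_gt0.
have [e1 U1'] := Uint nq.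
have [e2 U2'] := Uint dq.
exists (e1 - e2).
have -> : (numq c)%:~R / (denq c)%:~R / p ^ (e1 - e2) =
          ((numq c)%:~R / p ^ e1) * ((denq c)%:~R / p ^ e2)^-1.
  rewrite expfzDr ?p0 // -invr_expz; field.
  by rewrite !expfz_neq0 ?p0 // intK_neq0.
by apply: UM => //; apply: UV.
Qed.

Lemma pU (k : int) : U (p ^ k) -> k = 0.
Proof.
have key : forall n : nat, U (p ^+ n.+1) -> False.
  move=> n Un; apply: (notMU Un); rewrite exprS; apply: (MBM gd); first exact: Mp.
  by apply: (Bexp gd); exact: (gMB gd) Mp.
case: k => n /= Uk; last by exfalso; apply: (key n); have := UV Uk; rewrite invrK.
by case: n Uk => // n Uk; exfalso; apply: (key n).
Qed.


Definition dv (a b : K) := exists c, B c /\ b = c * a.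

Lemma dv_total a b : dv a b \/ dv b a.
Proof.
have [->|a0] := eqVneq a 0; first by right; exists 0; split; [exact: (B0 gd)|rewrite mul0r].
have [->|b0] := eqVneq b 0; first by left; exists 0; split; [exact: (B0 gd)|rewrite mul0r].
have : b / a != 0 by rewrite mulf_neq0 ?invr_eq0.
case/val => h; first by left; exists (b / a); split=> //; rewrite divfK.
by right; exists (a / b); split; [rewrite invf_div in h|rewrite divfK].
Qed.

Lemma dv_trans a b c : dv a b -> dv b c -> dv a c.
Proof.
move=> [x [Bx ->]] [y [By ->]]; exists (y * x); split; first exact: (gBM gd).
by rewrite mulrA.
Qed.

Lemma dv_refl a : dv a a.
Proof. by exists 1; split; [exact: (gB1 gd)|rewrite mul1r]. Qed.

Lemma exists_min (I : eqType) (F : I -> K) (s : seq I) : s != [::] ->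
  exists i, i \in s /\ forall j, j \in s -> dv (F i) (F j).
Proof.
elim: s => // a s IH _.
have [->|sn] := eqVneq s [::].
  by exists a; split; [rewrite inE eqxx|move=> j; rewrite inE => /eqP ->; exact: dv_refl].
have [i [iIn hi]] := IH sn.
have [h|h] := dv_total (F a) (F i).
  exists a; split; first by rewrite inE eqxx.
  move=> j; rewrite inE => /orP[/eqP ->|js]; first exact: dv_refl.
  exact: dv_trans h (hi j js).
exists i; split; first by rewrite inE iIn orbT.
by move=> j; rewrite inE => /orP[/eqP ->|js]; [exact: h|exact: hi].
Qed.


Variables (D : nat) (hD : forall k, (0 < k <= \dim (fullv : {vspace K}))%N -> (k %| D)%N) (D0 : (0 < D)%N).

Lemma Edef x : x != 0 -> exists e : int, U (x ^+ D / p ^ e).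
Proof.
move=> x0.
have /polyOver1P[q Dq] := minPolyOver 1 x.
have sq : size q = (adjoin_degree 1 x).+1.
  by rewrite -(size_map_poly (in_alg K)) -Dq size_minPoly.
have dle : (adjoin_degree 1 x <= \dim {:K})%N.
  have := dim_Fadjoin 1%AS x; rewrite dimv1 muln1 => <-; exact: dimvS (subvf _).
have root0 : (map_poly (in_alg K) q).[x] = 0 by rewrite -Dq minPolyxx.
pose t (i : 'I_(size q)) := (q`_i)%:A * x ^+ i.
have sumt : \sum_i t i = 0.
  by rewrite -[RHS]root0 horner_coef size_map_poly; apply: eq_bigr => i _; rewrite coef_map.
have q0 : q != 0 by rewrite -size_poly_gt0 sq.
have kq : ((size q).-1 < size q)%N by rewrite sq.
pose k := Ordinal kq.
have tk : t k != 0.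
  have : lead_coef q != 0 by rewrite lead_coef_eq0.
  by move=> lq; rewrite /t mulf_neq0 ?expf_neq0 // scaler_eq0 negb_or lq oner_eq0.
have ne : enum 'I_(size q) != [::] by rewrite -size_eq0 size_enum_ord sq.
have [i0 [_ hi0]] := exists_min t ne.
have hi j : dv (t i0) (t j) := hi0 j (mem_enum _ j).
have ti0 : t i0 != 0.
  have [c' [_ e']] := hi k; apply: contraNneq tk => z; by rewrite e' z mulr0.
pose c j := t j / t i0.
have Bc j : B (c j) by have [c' [Bc' e']] := hi j; rewrite /c e' mulfK.
have sumc : \sum_j c j = 0 by rewrite -mulr_suml sumt mul0r.
have ci0 : c i0 = 1 by rewrite /c divff.
have [j [ji0 nMj]] : exists j, j != i0 /\ ~ M (c j).
  apply: NNPP => h.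
  have allM : forall j, j != i0 -> M (c j).
    by move=> j ji; apply: NNPP => nM; apply: h; exists j.
  apply: (gM1 gd).
  have := sumc; rewrite (bigD1 i0) //= ci0.
  move/eqP; rewrite addr_eq0 => /eqP ->; apply: (BMN gd).
  by apply: sumIn; [exact: (gM0 gd)|exact: (gMD gd)|exact: allM].
have cj0 : c j != 0 by apply: contra_not_neq nMj => ->; exact: (gM0 gd).
have Ucj : U (c j) by split=> //; split; [exact: Bc|exact: (loc (Bc j) nMj)].
have qj : q`_j != 0 by apply: contraNneq cj0 => z; rewrite /c /t z scale0r !mul0r.
have qi0 : q`_i0 != 0 by apply: contraNneq ti0 => z; rewrite /t z scale0r mul0r.
have qq : q`_i0 / q`_j != 0 by rewrite mulf_neq0 ?invr_eq0.
have [e Ue] := Urat qq.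
pose kk : int := j%:Z - i0%:Z.
have ia : forall a b : rat, (a / b)%:A = (a%:A / b%:A : K) := fun a b => fmorph_div (in_alg K) a b.
have Xk : x ^ kk / p ^ e = c j * ((q`_i0 / q`_j)%:A / p ^ e).
  rewrite /c /t /kk ia expfzDr // -exprnN -!exprnP; field.
  rewrite !scaler_eq0 !negb_or qj qi0 oner_eq0 expf_neq0 // expfz_neq0 ?p0 //.
have Ukk : U (x ^ kk / p ^ e) by rewrite Xk; apply: UM.
have kk0 : kk != 0.
  by rewrite /kk subr_eq0; apply: contra ji0 => /eqP [] h; apply/eqP/val_inj.
have jlt := ltn_ord j; have ilt := ltn_ord i0.
have kkle : (`|kk| <= \dim {:K})%N.
  rewrite /kk; move: jlt ilt dle sq.
  move: (nat_of_ord j) (nat_of_ord i0) => a b.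
  move: (size q) (adjoin_degree 1 x) (\dim {:K}) => c1 d1 n'; clear; lia.
have dvk : (`|kk| %| D)%N by apply: hD; rewrite absz_gt0 kk0 kkle.
pose s : int := sgz kk * (D %/ `|kk|)%N.
have ks : kk * s = D.
  by rewrite /s mulrA [kk * _]mulrC -abszEsg -PoszM mulnC divnK.
exists (e * s).
have -> : x ^+ D / p ^ (e * s) = (x ^ kk / p ^ e) ^ s.
  rewrite expfzMl exprz_inv exprz_exp exprz_exp ks invr_expz mulrN exprnP //.
exact: Uz.
Qed.

Definition E x : int := epsilon (inhabits 0) (fun e => U (x ^+ D / p ^ e)).

Lemma EP x : x != 0 -> U (x ^+ D / p ^ E x).
Proof. by move=> x0; apply: (epsilon_spec (inhabits 0%R) (fun e => U (x ^+ D / p ^ e))); apply: Edef. Qed.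

Lemma Uuniq y e1 e2 : U (y / p ^ e1) -> U (y / p ^ e2) -> e1 = e2.
Proof.
move=> U1' U2'.
have y0 : y != 0 by have [h _] := U1'; apply: contraNneq h => ->; rewrite mul0r.
have : U (p ^ (e1 - e2)).
  have -> : p ^ (e1 - e2) = (y / p ^ e2) * (y / p ^ e1)^-1.
    rewrite expfzDr ?p0 // -invr_expz; field.
    by rewrite y0 !expfz_neq0 ?p0.
  by apply: UM => //; apply: UV.
by move/pU/eqP; rewrite subr_eq0 => /eqP.
Qed.

Lemma EM x y : x != 0 -> y != 0 -> E (x * y) = E x + E y.
Proof.
move=> x0 y0; apply: (Uuniq (EP (mulf_neq0 x0 y0))).
have -> : (x * y) ^+ D / p ^ (E x + E y) = (x ^+ D / p ^ E x) * (y ^+ D / p ^ E y).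
  by rewrite exprMn expfzDr ?p0 // invfM mulrACA.
by apply: UM; apply: EP.
Qed.

Lemma E1 : E 1 = 0.
Proof.
have := EM (oner_neq0 K) (oner_neq0 K); rewrite mulr1 => h.
by have := addrI (E 1) (etrans (addr0 _) h).
Qed.
Lemma Ele x y : x != 0 -> y != 0 -> B (y / x) -> E x <= E y.
Proof.
move=> x0 y0 Byx.
have Bd : B (p ^ (E y - E x)).
  have -> : p ^ (E y - E x) = (y / x) ^+ D * (y ^+ D / p ^ E y)^-1 * (x ^+ D / p ^ E x).
    rewrite expfzDr ?p0 // -invr_expz expr_div_n.
    have a0 : p ^ E y != 0 by rewrite expfz_neq0 ?p0.
    have b0 : p ^ E x != 0 by rewrite expfz_neq0 ?p0.
    have c0 : y ^+ D != 0 by rewrite expf_neq0.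
    have d0 : x ^+ D != 0 by rewrite expf_neq0.
    move: (p ^ E y) (p ^ E x) (y ^+ D) (x ^+ D) a0 b0 c0 d0 => a b c d a0 b0 c0 d0.
    by field; rewrite a0 b0 c0 d0.
  apply: (gBM gd); last by have [_ []] := EP x0.
  apply: (gBM gd); first exact: (Bexp gd).
  by have [_ []] := UV (EP y0).
have [//|lt] := lerP (E x) (E y).
exfalso; move: Bd; have : E y - E x < 0 by rewrite subr_lt0.
case: (E y - E x) => // n _ /= Bn.
apply: (gM1 gd); have -> : 1 = p * ((p ^+ n.+1)^-1 * p ^+ n).
  by rewrite exprS invfM mulrA mulrA mulfV ?p0 // mul1r mulVf // expf_neq0 ?p0.
by apply: (MBM gd); [exact: Mp|apply: (gBM gd) => //; apply: (Bexp gd); exact: (gMB gd) Mp].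
Qed.

Lemma EMpos m : M m -> m != 0 -> 0 < E m.
Proof.
move=> Mm m0; have Um := EP m0.
have [//|le] := ltrP 0 (E m).
exfalso; apply: (notMU Um).
have MD : M (m ^+ D).
  move: D0; case: D => // n _; rewrite exprS; apply: (MBM gd) => //; apply: (Bexp gd); exact: (gMB gd).
move: le; case: (E m) => [[|n]|n] //= _.
  by rewrite expr0z invr1 mulr1.
rewrite invrK; apply: (MBM gd) => //; apply: (Bexp gd); exact: (gMB gd) Mp.
Qed.
Definition hh : rat := 2^-1.
Definition v (x : K) : rat := if x == 0 then 0 else hh ^ (E x).

Lemma hh_gt0 : 0 < hh. Proof. by rewrite /hh invr_gt0. Qed.
Lemma hh0 : hh != 0. Proof. by rewrite gt_eqF // hh_gt0. Qed.

Lemma hle a b : b <= a -> hh ^ a <= hh ^ b.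
Proof.
move=> ba; rewrite -(subrK b a) expfzDr ?hh0 // mulrC; apply: ler_piMr.
  by apply: exprz_ge0; rewrite ltW // hh_gt0.
have : 0 <= a - b by rewrite subr_ge0.
by case: (a - b) => // n _ /=; apply: exprn_ile1; rewrite /hh ?invr_ge0 // invf_le1.
Qed.

Lemma v_ge0 x : 0 <= v x.
Proof. by rewrite /v; case: eqP => // _; apply: exprz_ge0; rewrite ltW // hh_gt0. Qed.

Lemma v_eq0 x : v x = 0 <-> x = 0.
Proof.
rewrite /v; case: eqP => // x0; split=> // h0; exfalso.
by move/eqP: h0; rewrite expfz_eq0 (negbTE hh0) andbF.
Qed.

Lemma v_mul x y : v (x * y) = v x * v y.
Proof.
rewrite /v; have [->|x0] := eqVneq x 0; first by rewrite mul0r eqxx mul0r.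
have [->|y0] := eqVneq y 0; first by rewrite mulr0 eqxx mulr0.
by rewrite mulf_eq0 (negbTE x0) (negbTE y0) /= EM // expfzDr // hh0.
Qed.

Lemma v_ultra x y : v (x + y) <= Num.max (v x) (v y).
Proof.
have [->|x0] := eqVneq x 0; first by rewrite add0r le_max lexx orbT.
have [->|y0] := eqVneq y 0; first by rewrite addr0 le_max lexx.
have [->|xy0] := eqVneq (x + y) 0.
  by rewrite {1}/v eqxx le_max v_ge0.
rewrite le_max /v (negbTE x0) (negbTE y0) (negbTE xy0).
have : y / x != 0 by rewrite mulf_neq0 ?invr_eq0.
case/val => Byx.
  apply/orP; left; apply: hle; apply: Ele => //.
  by rewrite mulrDl divff //; apply: (gBD gd) => //; exact: (gB1 gd).
apply/orP; right; apply: hle; apply: Ele => //.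
rewrite invf_div in Byx.
by rewrite mulrDl divff // addrC; apply: (gBD gd) => //; exact: (gB1 gd).
Qed.

Lemma v_tri x y : v (x + y) <= v x + v y.
Proof.
apply: le_trans (v_ultra x y) _; rewrite ge_max.
by rewrite ler_wpDr ?v_ge0 // ler_wpDl ?v_ge0.
Qed.

Lemma v_absval : g != 0 -> is_absval v.
Proof.
move=> g0; split.
- exact: v_ge0.
- exact: v_eq0.
- exact: v_mul.
- exact: v_tri.
have Eg := EMpos (gMg gd) g0.
have h1 : hh != 1.
  by rewrite /hh; apply/eqP => e; have := congr1 GRing.inv e; rewrite invrK invr1.
exists g; split=> //; rewrite /v (negbTE g0) pexprz_eq1.
  by rewrite negb_or gt_eqF // h1.
by rewrite ltW // hh_gt0.
Qed.

Lemma v_nonarch : nonarchimedean v.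
Proof. exact: v_ultra. Qed.

Lemma v_unstable : g != 0 -> unstable v g^-1.
Proof.
move=> g0 e e0.
have vg : v g <= hh.
  have E1g : 1 <= E g by have := EMpos (gMg gd) g0; clear; lia.
  rewrite /v (negbTE g0); have := hle E1g.
  by rewrite expr1z.
have vgm m : v (g ^+ m) <= hh ^+ m.
  elim: m => [|m IH]; first by rewrite /v expr0 oner_eq0 E1.
  rewrite exprS v_mul exprS; apply: ler_pM => //; exact: v_ge0.
exists (Num.bound e^-1) => m Nm.
rewrite -exprVn invrK; apply: le_lt_trans (vgm m) _.
rewrite /hh exprVn -[e]invrK ltf_pV2 ?posrE ?invr_gt0 ?exprn_gt0 //.
have ei : 0 <= e^-1 by rewrite invr_ge0 ltW.
have := archi_boundP ei => h.
apply: (lt_le_trans h); rewrite -natrX ler_nat.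
apply: (leq_trans Nm); exact: ltnW (ltn_expl _ _).
Qed.
End Abs.

Lemma size_map_le (aR rR : nzSemiRingType) (h : aR -> rR) (r : {poly aR}) :
  (size (map_poly h r) <= size r)%N.
Proof. by rewrite map_polyE (leq_trans (size_Poly _)) // size_map. Qed.

Section Init.
Variables (K : fieldExtType rat) (f : {poly int}) (beta : K) (P : nat).
Hypotheses (Pp : prime P) (cf : zcontents f = 1)
  (irr : irreducible_poly (map_poly (fun a : int => a%:~R) f : {poly rat}))
  (rt : root (map_poly (fun a : int => a%:~R) f) beta) (b0 : beta != 0)
  (Pf : (P%:Z %| lead_coef f)%Z).

Definition evK (r : {poly rat}) : K := (map_poly (in_alg K) r).[beta].

Lemma evK_int (h : {poly int}) : evK (map_poly intr h) = (map_poly intr h).[beta].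
Proof.
rewrite /evK -map_poly_comp; congr (_.[_]); apply: eq_map_poly => z /=.
exact: (rmorph_int (in_alg K) z).
Qed.

Lemma divides (h : {poly int}) : (map_poly intr h).[beta] = 0 -> (f %| h).
Proof.
move=> h0; rewrite -dvdp_rat_int.
set fQ := map_poly intr f; set hQ := map_poly intr h.
have [irr1 irr2] := irr.
have G1 := dvdp_gcdl fQ hQ; have G2 := dvdp_gcdr fQ hQ.
have [s1|s1] := eqVneq (size (gcdp fQ hQ)) 1%N; last first.
  have := irr2 _ s1 G1 => /eqp_dvdl <-; exact: G2.
exfalso; have [u Hu] := Bezoutp fQ hQ.
move/eqP: s1; rewrite size_poly_eq1 => e1.
have := eqp_trans Hu e1 => /eqpP[[c1 c2] /andP[c10 c20] /= ec].
have := congr1 evK ec.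
rewrite /evK !linearZ /= rmorphD !rmorphM /= rmorph1 hornerZ hornerD !hornerM hornerZ hornerC.
have fb : (map_poly (in_alg K) fQ).[beta] = 0 by have := evK_int f; rewrite /evK => ->; exact/eqP.
have hb : (map_poly (in_alg K) hQ).[beta] = 0 by have := evK_int h; rewrite /evK => ->.
rewrite fb hb !mulr0 addr0 mulr0 => /esym/eqP.
by rewrite mulr1 scaler_eq0 oner_eq0 orbF (negbTE c20).
Qed.

Lemma intK_neq0' (z : int) : z != 0 -> (z%:~R : K) != 0.
Proof. by move=> z0; rewrite -(rmorph_int (in_alg K)) fmorph_eq0 intr_eq0. Qed.

Lemma proper (q : {poly int}) : (P%:Z %| q`_0)%Z -> (map_poly intr q).[beta^-1] <> 1.
Proof.
move=> Pq e.
have q0 : q != 0 by apply: contra_eq_neq e => ->; rewrite rmorph0 horner0 eq_sym oner_eq0.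
set n := (size q).-1.
have sq : size q = n.+1 by rewrite /n prednK // size_poly_gt0.
have smap : size (map_poly intr q : {poly K}) = size q.
  by apply: size_map_poly_id0; apply: intK_neq0'; rewrite lead_coef_eq0.
have := horner_rev b0 (eq_leq (etrans smap sq)); rewrite e mulr1 smap => eb.
pose R : {poly int} := \poly_(j < size q) q`_(n - j).
have Rb : (map_poly intr R).[beta] = beta ^+ n.
  have sR : (size (map_poly intr R : {poly K}) <= size q)%N.
    exact: leq_trans (size_map_le _ _) (size_poly _ _).
  rewrite (horner_coef_wide _ sR) eb (reindex_inj rev_ord_inj) /=.
  apply: eq_bigr => i _; rewrite !coef_map coef_poly /=.
  have ilt := ltn_ord i.
  move: ilt sq; move: (nat_of_ord i) => a; move: (size q) => b ilt sq.
  have -> : (b - a.+1 < b)%N by move: ilt; clear; lia.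
  have -> : (n - (b - a.+1) = a)%N by move: ilt sq; clear; lia.
  by have -> : (b - a.+1 = n - a)%N by move: ilt sq; clear; lia.
pose H := R - 'X^n.
have Hb : (map_poly intr H).[beta] = 0.
  by rewrite rmorphB /= map_polyXn hornerD hornerN hornerXn Rb subrr.
have [r Hr] := dvdpP_int (divides Hb).
have zf : zprimitive f = f by rewrite {2}[f]zpolyEprim cf scale1r.
have HN : H`_n = q`_0 - 1.
  rewrite coefB coefXn eqxx coef_poly subnn.
  by have -> : (n < size q)%N by rewrite sq.
have P1 : ~ (P%:Z %| 1)%Z.
  by rewrite dvdzE /= dvdn1 => /eqP P1; move: Pp; rewrite P1.
have Hn0 : H`_n != 0.
  rewrite HN subr_eq0; apply/eqP => q01; apply: P1; move: Pq; rewrite q01; exact.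
have sH : size H = n.+1.
  apply/eqP; rewrite eqn_leq; apply/andP; split.
    rewrite /H; apply: leq_trans (size_add _ _) _; rewrite size_opp size_polyXn geq_max leqnn andbT.
    by rewrite -sq; exact: size_poly.
  by rewrite ltnNge; apply/negP => /leq_sizeP /(_ n (leqnn n)) /eqP; rewrite (negbTE Hn0).
have lH : lead_coef H = q`_0 - 1 by rewrite /lead_coef sH.
have PH : (P%:Z %| q`_0 - 1)%Z by rewrite -lH Hr zf lead_coefM; apply: dvdz_mulr.
apply: P1; have : (P%:Z %| q`_0 - (q`_0 - 1))%Z by exact: rpredB.
by rewrite opprB addrC subrK.
Qed.
Definition Bi (z : K) := exists q : {poly int}, z = (map_poly intr q).[beta^-1].
Definition Mi (z : K) := exists q : {poly int}, (P%:Z %| q`_0)%Z /\ z = (map_poly intr q).[beta^-1].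

Lemma good_init : good (P%:R) (beta^-1) Bi Mi.
Proof.
split.
- by exists 1; rewrite rmorph1 hornerC.
- by move=> _ _ [q1 ->] [q2 ->]; exists (q1 + q2); rewrite rmorphD hornerD.
- by move=> _ [q1 ->]; exists (- q1); rewrite rmorphN hornerN.
- by move=> _ _ [q1 ->] [q2 ->]; exists (q1 * q2); rewrite rmorphM hornerM.
- by move=> _ [q1 [_ ->]]; exists q1.
- by exists 0; rewrite coef0 rmorph0 horner0; split=> //; exact: dvdz0.
- move=> _ _ [q1 [d1 ->]] [q2 [d2 ->]]; exists (q1 + q2); rewrite rmorphD hornerD coefD.
  by split=> //; exact: rpredD.
- move=> _ _ [q1 ->] [q2 [d2 ->]]; exists (q1 * q2); rewrite rmorphM hornerM coef0M.
  by split=> //; exact: dvdz_mull.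
- by move=> [q [d e]]; apply: (proper d); rewrite -e.
- exists (P%:Z)%:P; rewrite map_polyC hornerC coefC /=; split=> //.
- exists 'X; rewrite map_polyX hornerX coefX /=; split=> //; exact: dvdz0.
Qed.
End Init.

Unset Implicit Arguments.

Lemma forward (K : fieldExtType rat) (f : {poly int}) (beta : K) (R : archiFieldType) (v : K -> R) :
  (1 < size f)%N -> (lead_coef f = 1 \/ lead_coef f = -1) ->
  root (map_poly (fun a : int => a%:~R) f) beta -> beta != 0 ->
  is_absval v -> unstable v beta -> nonarchimedean v -> False.
Proof.
move=> sf hl rt b0 [vge0 veq0 vmul vtri _] vun vna.
have v00 : v 0 = 0 by apply/veq0.
have v1 : v 1 = 1.
  have h : v 1 * v 1 = 1 * v 1 by rewrite -vmul mulr1 mul1r.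
  have n0 : v 1 != 0 by apply/eqP => /veq0 /eqP; rewrite oner_eq0.
  exact: (mulIf n0 h).
have vN1 : v (-1) = 1.
  have : v (-1) ^+ 2 = 1 by rewrite expr2 -vmul mulrNN mulr1 v1.
  move/eqP; rewrite sqrf_eq1 => /orP[/eqP //|/eqP h].
  have := vge0 (-1); rewrite h oppr_ge0 => hh.
  by have := le_lt_trans hh (@ltr01 R); rewrite ltxx.
have vN x : v (- x) = v x by rewrite -mulN1r vmul vN1 mul1r.
have vX x n : v (x ^+ n) = v x ^+ n.
  by elim: n => [|n IH]; [rewrite !expr0 v1|rewrite !exprS vmul IH].
have vnat n : v n%:R <= 1.
  elim: n => [|n IH]; first by rewrite v00 ler01.
  rewrite -addn1 natrD; apply: le_trans (vna _ _) _; rewrite ge_max IH v1 lexx //.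
have vint (z : int) : v z%:~R <= 1.
  by case: z => n; [exact: vnat| rewrite NegzE mulrNz vN; exact: vnat].
have [vb1|vb1] := lerP (v beta) 1.
  have [N hN] := vun 1 ltr01.
  have h5 := hN N (leqnn N).
  have h : v (beta ^- N) * v (beta ^+ N) = 1 by rewrite -vmul mulVf ?v1 // expf_neq0.
  have h2 : v (beta ^+ N) <= 1 by rewrite vX; apply: exprn_ile1.
  have h4 := vge0 (beta ^- N).
  have : v (beta ^- N) * v (beta ^+ N) <= v (beta ^- N) by apply: ler_piMr.
  by rewrite h => h6; have := le_lt_trans h6 h5; rewrite ltxx.
set d := (size f).-1.
have sd : size f = d.+1 by rewrite /d prednK // (ltn_trans _ sf).
have smap : size (map_poly (fun a : int => a%:~R) f : {poly K}) = size f.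
  by apply: size_map_poly_id0; apply: intK_neq0'; rewrite lead_coef_eq0 -size_poly_gt0 sd.
move: rt; rewrite /root horner_coef smap sd big_ord_recr /= => /eqP e.
have ld : f`_d = lead_coef f by rewrite /lead_coef sd.
have vT : v ((map_poly (fun a : int => a%:~R) f)`_d * beta ^+ d) = v beta ^+ d.
  by rewrite vmul coef_map /= ld vX; case: hl => ->; rewrite ?mulrN1z ?mulr1z ?vN v1 mul1r.
have vb0 : 0 < v beta by apply: lt_trans vb1; exact: ltr01.
have vS : v (\sum_(i < d) (map_poly (fun a : int => a%:~R) f)`_i * beta ^+ i) <= v beta ^+ d.-1.
  apply: (big_ind (fun x => v x <= v beta ^+ d.-1)).
  - by rewrite v00 exprn_ge0 // ltW.
  - by move=> x y hx hy; apply: le_trans (vna _ _) _; rewrite ge_max hx hy.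
  - move=> i _; rewrite vmul coef_map /= vX.
    rewrite -[X in _ <= X]mul1r; apply: ler_pM => //; try (by rewrite exprn_ge0 // ltW); try exact: vint.
    by apply: ler_weXn2l; [exact: ltW|]; have := ltn_ord i; clear; lia.
have : v ((map_poly (fun a : int => a%:~R) f)`_d * beta ^+ d) =
       v (\sum_(i < d) (map_poly (fun a : int => a%:~R) f)`_i * beta ^+ i).
  by move: e; set S := \sum_(i < d) _; set T := _ * _ => e; have -> : T = - S by apply/eqP; rewrite -addr_eq0 addrC e.
rewrite vT => h.
have d0 : (0 < d)%N by move: sf sd; clear; lia.
have hd : v beta ^+ d = v beta * v beta ^+ d.-1 by rewrite -exprS prednK.
have pos : 0 < v beta ^+ d.-1 by rewrite exprn_gt0.
rewrite -h hd in vS.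
have : v beta ^+ d.-1 < v beta * v beta ^+ d.-1 by rewrite ltr_pMl.
by move=> h7; have := le_lt_trans vS h7; rewrite ltxx.
Qed.

Unset Implicit Arguments.
Theorem mainTheorem13 (f : {poly int}) (K : fieldExtType rat) (beta : K) :
  associated_poly f ->
  irreducible_poly (map_poly (fun a : int => a%:~R) f : {poly rat}) ->
  (<<1%VS; beta>>%VS = fullv) ->
  root (map_poly (fun a : int => a%:~R) f) beta ->
  (lead_coef f = 1 \/ lead_coef f = -1) <->
  (forall (R : archiFieldType) (v : K -> R),
      is_absval v -> unstable v beta -> archimedean_place v).
Proof.
move=> [cf a0 lpos _] irr hfull rt.
have b0 : beta != 0.
  apply: contraTneq rt => ->; rewrite /root horner_coef0 coef_map /=.
  exact: intK_neq0' a0.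
have sf : (1 < size f)%N.
  by have [h _] := irr; move: h; rewrite size_rat_int_poly.
split.
  move=> hl R v ab un na; exact: (forward K f beta R v sf hl rt b0 ab un na).
move=> H; apply: NNPP => nl.
set a := lead_coef f.
have a1 : (1 < `|a|)%N.
  have : a != 1 by apply/eqP => e; apply: nl; left.
  move: lpos; rewrite -/a; case: a => [n|n] //= pos ne1.
  by move: pos ne1; case: n => [|[|n]].
have Pp := pdiv_prime a1.
have Pf : ((pdiv `|a|)%:Z %| a)%Z by rewrite dvdzE /= pdiv_dvd.
have gi := good_init Pp cf irr rt b0 Pf.
have [B [M [gd hmax]]] := exists_max gi.
have loc := local gd hmax.
have val := valuation gd hmax.
have hD : forall k, (0 < k <= \dim (fullv : {vspace K}))%N -> (k %| (\dim (fullv : {vspace K}))`!)%N.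
  by move=> k hk; exact: dvdn_fact.
have D0 := fact_gt0 (\dim (fullv : {vspace K})).
have g0 : beta^-1 != 0 by rewrite invr_eq0.
have ab := v_absval Pp gd loc val hD D0 g0.
have un := v_unstable Pp gd loc val hD D0 g0.
rewrite invrK in un.
have na := v_nonarch Pp gd loc val hD.
exact: (H _ _ ab un na).
Qed.
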